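(* Let $S_r$ be the unilateral right shift on $\ell^2(\mathbb{N})$. Then the family $\{S_r^n\}_{n\in\mathbb{N}}$ is UEC on the closed unit ball of $\ell^2(\mathbb{N})$, whereas the family of adjoints $\{(S_r^* )^n\}_{n\in\mathbb{N}}$ is not UEC on that ball. Consequently, the family of maps $A\mapsto AS_r^n$ ($n\in\mathbb{N}$) on the closed unit ball of $B(\ell^2(\mathbb{N}))$ is not UEC, even though $\{S_r^n\}_{n\in\mathbb{N}}$ is UEC.
   Context: The closed unit ball $H_1$ of a separable Hilbert space $H$ carries the weak uniformity (induced by $\rho(x,y)=\sum_{i\ge1}2^{-i}|\langle x-y,h_i\rangle|$ for a dense sequence $(h_i)$ in $H_1$), and the closed unit ball $B_1$ of $B(H)$ carries the weak operator uniformity (induced by $d(A,B)=\sum_{i,j\ge1}2^{-i-j}|\langle (A-B)h_i,h_j\rangle|$). A family $\mathcal{F}$ of maps from a metric space $(X,d)$ to itself is uniformly equicontinuous (UEC) if for every $\epsilon>0$ there is $\delta>0$ such that $d(x,y)<\delta$ implies $d(f(x),f(y))<\epsilon$ for all $f\in\mathcal{F}$, $x,y\in X$. *)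

(* Defs.v *)
From Stdlib Require Import Reals ClassicalEpsilon.
Open Scope R_scope.

Record C := mkC { Re : R ; Im : R }.
Definition C0 : C := mkC 0 0.
Definition Cadd (z w : C) : C := mkC (Re z + Re w) (Im z + Im w).
Definition Csub (z w : C) : C := mkC (Re z - Re w) (Im z - Im w).
Definition Cmul (z w : C) : C :=
  mkC (Re z * Re w - Im z * Im w) (Re z * Im w + Im z * Re w).
Definition Cmod (z : C) : R := sqrt (Re z ^ 2 + Im z ^ 2).

Definition sum_inf (a : nat -> R) : R :=
  epsilon (inhabits 0) (fun l => infinite_sum a l).

(** Sequences indexed by N = {0,1,2,...}; l^2(N) is the square-summable ones. *)
Definition vec := nat -> C.
Definition sq_summable (x : vec) : Prop :=
  exists l, infinite_sum (fun k => Cmod (x k) ^ 2) l.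
Definition vadd (x y : vec) : vec := fun k => Cadd (x k) (y k).
Definition vsub (x y : vec) : vec := fun k => Csub (x k) (y k).
Definition vscale (c : C) (x : vec) : vec := fun k => Cmul c (x k).
Definition norm (x : vec) : R := sqrt (sum_inf (fun k => Cmod (x k) ^ 2)).
(** <x, y> = sum_k x_k * conj (y_k) *)
Definition inner (x y : vec) : C :=
  mkC (sum_inf (fun k => Re (x k) * Re (y k) + Im (x k) * Im (y k)))
      (sum_inf (fun k => Im (x k) * Re (y k) - Re (x k) * Im (y k))).

Definition in_ball (x : vec) : Prop := sq_summable x /\ norm x <= 1.

Definition dense_seq (h : nat -> vec) : Prop :=
  (forall i, in_ball (h i)) /\
  (forall x, in_ball x -> forall eps, eps > 0 -> exists i, norm (vsub x (h i)) < eps).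

(** Weak uniformity metric on H_1:  rho(x,y) = sum_{i>=1} 2^{-i} |<x-y,h_i>|
    (our sequence h is indexed from 0, so h i plays the role of h_{i+1}). *)
Definition rho (h : nat -> vec) (x y : vec) : R :=
  sum_inf (fun i => (/ 2) ^ (S i) * Cmod (inner (vsub x y) (h i))).

(** Operators on l^2(N): maps on sequences; the closed unit ball B_1 of B(H)
    consists of those that are linear on l^2, map l^2 into l^2, and have norm <= 1. *)
Definition op := vec -> vec.
Definition in_opball (A : op) : Prop :=
  (forall x, sq_summable x -> sq_summable (A x) /\ norm (A x) <= norm x) /\
  (forall x y, sq_summable x -> sq_summable y -> A (vadd x y) = vadd (A x) (A y)) /\
  (forall c x, sq_summable x -> A (vscale c x) = vscale c (A x)).

Definition dWO (h : nat -> vec) (A B : op) : R :=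
  sum_inf (fun i => sum_inf (fun j =>
    (/ 2) ^ (S i) * (/ 2) ^ (S j) * Cmod (inner (vsub (A (h i)) (B (h i))) (h j)))).

Definition UEC {X : Type} (P : X -> Prop) (d : X -> X -> R) (F : nat -> X -> X) : Prop :=
  forall eps, eps > 0 -> exists delta, delta > 0 /\
    forall n x y, P x -> P y -> d x y < delta -> d (F n x) (F n y) < eps.

Definition shiftR (x : vec) : vec :=
  fun k => match k with O => C0 | S k' => x k' end.
Definition shiftR_adj (x : vec) : vec := fun k => x (S k).

(* Main.v *)
Require Import Defs.
From Stdlib Require Import Reals Lra Lia Psatz ClassicalEpsilon FunctionalExtensionality PropExtensionality Classical.
Open Scope R_scope.

Lemma Un_cv_ext (u v : nat -> R) l : (forall n, u n = v n) -> Un_cv u l -> Un_cv v l.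
Proof. intros E H eps He. destruct (H eps He) as [N HN]. exists N. intros n Hn. rewrite <- E. auto. Qed.

Lemma sum_inf_eq a l : infinite_sum a l -> sum_inf a = l.
Proof.
  intro H. unfold sum_inf.
  assert (Hex: exists l, infinite_sum a l) by eauto.
  pose proof (epsilon_spec (inhabits 0) _ Hex) as H2. eapply uniqueness_sum; eauto.
Qed.

Definition conv (a : nat -> R) := exists l, infinite_sum a l.

Lemma conv_sum a : conv a -> infinite_sum a (sum_inf a).
Proof. intros [l H]. rewrite (sum_inf_eq a l H). exact H. Qed.

Lemma sum_inf_ext a b : (forall k, a k = b k) -> sum_inf a = sum_inf b.
Proof. intro E. f_equal. apply functional_extensionality. exact E. Qed.

Lemma sum_inf_iff a b : (forall l, infinite_sum a l <-> infinite_sum b l) -> sum_inf a = sum_inf b.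
Proof.
  intro E. unfold sum_inf. f_equal. apply functional_extensionality. intro l.
  apply propositional_extensionality. apply E.
Qed.

Lemma is_plus a b la lb : infinite_sum a la -> infinite_sum b lb ->
  infinite_sum (fun k => a k + b k) (la + lb).
Proof.
  intros Ha Hb. apply (Un_cv_ext (fun n => sum_f_R0 a n + sum_f_R0 b n)).
  - intro n. rewrite sum_plus. reflexivity.
  - apply CV_plus; assumption.
Qed.

Lemma is_const c : Un_cv (fun _ => c) c.
Proof. intros eps He. exists 0%nat. intros. unfold Rdist. rewrite Rminus_diag, Rabs_R0. lra. Qed.

Lemma is_scal a la c : infinite_sum a la -> infinite_sum (fun k => c * a k) (c * la).
Proof.
  intros Ha. apply (Un_cv_ext (fun n => c * sum_f_R0 a n)).
  - intro n. rewrite scal_sum. apply sum_eq. intros. ring.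
  - apply (CV_mult (fun _ => c)); [apply is_const | assumption].
Qed.

Lemma partial_le a l n : (forall k, 0 <= a k) -> infinite_sum a l -> sum_f_R0 a n <= l.
Proof.
  intros Hp H. apply (growing_ineq (sum_f_R0 a)); [|exact H].
  intro m. simpl. specialize (Hp (S m)). lra.
Qed.

Lemma term_le_partial a n : (forall k, 0 <= a k) -> a n <= sum_f_R0 a n.
Proof.
  intros Hp. destruct n; simpl. lra.
  pose proof (cond_pos_sum a n Hp). lra.
Qed.

Lemma lim_le u l N K : Un_cv u l -> (forall n, (n >= N)%nat -> u n <= K) -> l <= K.
Proof.
  intros H Hb. destruct (Rle_dec l K) as [|Hn]; auto. exfalso.
  destruct (H (l - K)) as [N0 HN0]. lra.
  specialize (HN0 (max N N0) ltac:(lia)). specialize (Hb (max N N0) ltac:(lia)).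
  unfold Rdist in HN0. apply Rabs_def2 in HN0. lra.
Qed.

Lemma sum_nonneg a : (forall k, 0 <= a k) -> conv a -> 0 <= sum_inf a.
Proof.
  intros Hp Hc. apply conv_sum in Hc.
  pose proof (partial_le a _ 0 Hp Hc). simpl in H. specialize (Hp 0%nat). lra.
Qed.

Lemma term_le_sum a n : (forall k, 0 <= a k) -> conv a -> a n <= sum_inf a.
Proof.
  intros Hp Hc. apply conv_sum in Hc. pose proof (partial_le a _ n Hp Hc).
  pose proof (term_le_partial a n Hp). lra.
Qed.

Lemma comp_sum a b L : (forall k, 0 <= a k <= b k) -> infinite_sum b L ->
  conv a /\ sum_inf a <= L.
Proof.
  intros Hab Hb. destruct (Rseries_CV_comp a b Hab (exist _ L Hb)) as [l Hl].
  assert (infinite_sum a l) by exact Hl.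
  split. exists l; auto. rewrite (sum_inf_eq a l H).
  eapply Rle_cv_lim; [|exact Hl|exact Hb]. intro n. apply sum_Rle. intros. apply Hab.
Qed.

Lemma abs_sum g b L : (forall k, Rabs (g k) <= b k) -> infinite_sum b L ->
  conv g /\ Rabs (sum_inf g) <= L.
Proof.
  intros Hg Hb.
  assert (Hb2 : infinite_sum (fun k => 2 * b k) (2 * L)) by (apply is_scal; auto).
  destruct (comp_sum (fun k => Rabs (g k) + g k) (fun k => 2 * b k) (2*L)) as [[l1 H1] _]; auto.
  { intro k. specialize (Hg k). split. pose proof (Rabs_pos (g k)). pose proof (Rle_abs (- g k)). rewrite Rabs_Ropp in H0. lra.
    pose proof (Rle_abs (g k)). lra. }
  destruct (comp_sum (fun k => Rabs (g k) - g k) (fun k => 2 * b k) (2*L)) as [[l2 H2] _]; auto.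
  { intro k. specialize (Hg k). split. pose proof (Rle_abs (g k)). lra.
    pose proof (Rle_abs (- g k)). rewrite Rabs_Ropp in H. lra. }
  assert (Hs : infinite_sum g ((l1 - l2)/2)).
  { pose proof (is_plus _ _ _ _ H1 (is_scal _ _ (-1) H2)) as H3.
    pose proof (is_scal _ _ (/2) H3) as H4.
    apply (Un_cv_ext (fun n => sum_f_R0 (fun k => /2 * ((Rabs (g k) + g k) + -1 * (Rabs (g k) - g k))) n)).
    - intro n. apply sum_eq. intros. field.
    - replace ((l1 - l2)/2) with (/2 * (l1 + -1 * l2)) by field. exact H4. }
  split. exists ((l1-l2)/2); auto.
  rewrite (sum_inf_eq _ _ Hs).
  apply (sum_cv_maj b (fun k _ => g k) 0 ((l1-l2)/2) L); auto.
Qed.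

Lemma half_pow_pos n : 0 < (/2)^n.
Proof. apply pow_lt. lra. Qed.

Lemma geo_partial n : sum_f_R0 (fun j => (/2)^(S j)) n = 1 - (/2)^(S n).
Proof. induction n; simpl in *. field. rewrite IHn. simpl. field. Qed.

Lemma geo_sum : infinite_sum (fun j => (/2)^(S j)) 1.
Proof.
  intros eps He. destruct (pow_lt_1_zero (/2) ltac:(rewrite Rabs_pos_eq; lra) eps He) as [N HN].
  exists N. intros n Hn. unfold Rdist. rewrite geo_partial.
  specialize (HN (S n) ltac:(lia)). replace (1 - (/2)^(S n) - 1) with (- (/2)^(S n)) by ring.
  rewrite Rabs_Ropp. auto.
Qed.

Lemma L_geo a c : (forall j, 0 <= a j <= c * (/2)^(S j)) -> conv a /\ sum_inf a <= c.
Proof.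
  intro H. pose proof (is_scal _ _ c geo_sum) as H0. rewrite Rmult_1_r in H0.
  exact (comp_sum a (fun k => c * (/2)^(S k)) c H H0).
Qed.

Lemma L_trunc a K N : (forall i, 0 <= a i <= K * (/2)^(S i)) ->
  sum_inf a <= sum_f_R0 a N + K * (/2)^(S N).
Proof.
  intro H. destruct (L_geo a K H) as [Hc _]. apply conv_sum in Hc.
  assert (HK : 0 <= K).
  { specialize (H 0%nat). pose proof (half_pow_pos 1). destruct (Rle_dec 0 K); auto.
    nra. }
  assert (Hm : forall m, (m >= N)%nat -> sum_f_R0 a m + K * (/2)^(S m) <= sum_f_R0 a N + K * (/2)^(S N)).
  { intros m Hm. induction Hm. lra.
    simpl sum_f_R0. specialize (H (S m)).
    assert (K * (/2)^(S (S m)) = K * (/2)^(S m) * /2) by (simpl; ring).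
    pose proof (half_pow_pos (S m)). nra. }
  apply (lim_le _ _ N _ Hc). intros n Hn. specialize (Hm n Hn).
  pose proof (half_pow_pos (S n)). nra.
Qed.

Lemma partial_bound a N c : (forall i, (i <= N)%nat -> a i <= c) -> sum_f_R0 a N <= INR (S N) * c.
Proof.
  intro H. induction N. simpl. specialize (H 0%nat ltac:(lia)). lra.
  simpl sum_f_R0. rewrite S_INR.
  assert (sum_f_R0 a N <= INR (S N) * c) by (apply IHN; intros; apply H; lia).
  specialize (H (S N) ltac:(lia)). rewrite Rmult_plus_distr_r. lra.
Qed.

Lemma fin_bound (P : nat -> nat -> Prop) : (forall a, exists j, P a j) ->
  forall N, exists J, forall a, (a <= N)%nat -> exists j, (j <= J)%nat /\ P a j.
Proof.
  intros H N. induction N.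
  - destruct (H 0%nat) as [j Hj]. exists j. intros a Ha. exists j. split; auto.
    replace a with 0%nat by lia. auto.
  - destruct IHN as [J HJ]. destruct (H (S N)) as [j Hj]. exists (max J j).
    intros a Ha. destruct (Nat.eq_dec a (S N)).
    + subst. exists j. split; auto. lia.
    + destruct (HJ a ltac:(lia)) as [j' [? ?]]. exists j'. split; auto. lia.
Qed.

Lemma half_pow_le1 n : (/2)^n <= 1.
Proof. induction n; simpl. lra. pose proof (half_pow_pos n). nra. Qed.

Lemma half_pow_le i j : (i <= j)%nat -> (/2)^j <= (/2)^i.
Proof.
  intro H. replace j with (i + (j - i))%nat by lia. rewrite pow_add.
  pose proof (half_pow_pos i). pose proof (half_pow_le1 (j-i)). nra.
Qed.

Definition E (u : vec) : R := sum_inf (fun k => Cmod (u k) ^ 2).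
Definition zerov : vec := fun _ => C0.
Definition reT (u w : vec) k := Re (u k) * Re (w k) + Im (u k) * Im (w k).
Definition imT (u w : vec) k := Im (u k) * Re (w k) - Re (u k) * Im (w k).

Lemma inner_eq u w : inner u w = mkC (sum_inf (reT u w)) (sum_inf (imT u w)).
Proof. reflexivity. Qed.

Lemma Cmod_sq z : Cmod z ^ 2 = Re z ^ 2 + Im z ^ 2.
Proof. unfold Cmod. apply pow2_sqrt. nra. Qed.

Lemma Cmod_nonneg z : 0 <= Cmod z.
Proof. apply sqrt_pos. Qed.

Lemma sq_abs x : x ^ 2 = Rabs x ^ 2.
Proof. destruct (Rle_dec 0 x). rewrite Rabs_right by lra. ring. rewrite Rabs_left by lra. ring. Qed.

Lemma Cmod_le_sum z : Cmod z <= Rabs (Re z) + Rabs (Im z).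
Proof.
  unfold Cmod. rewrite <- (sqrt_pow2 (Rabs (Re z) + Rabs (Im z))).
  2: pose proof (Rabs_pos (Re z)); pose proof (Rabs_pos (Im z)); lra.
  apply sqrt_le_1_alt.
  rewrite (sq_abs (Re z)), (sq_abs (Im z)). pose proof (Rabs_pos (Re z)); pose proof (Rabs_pos (Im z)). nra.
Qed.

Lemma Re_le_Cmod z : Rabs (Re z) <= Cmod z.
Proof.
  unfold Cmod. rewrite <- (sqrt_pow2 (Rabs (Re z))) by apply Rabs_pos. apply sqrt_le_1_alt.
  rewrite <- sq_abs. nra.
Qed.

Lemma Im_le_Cmod z : Rabs (Im z) <= Cmod z.
Proof.
  unfold Cmod. rewrite <- (sqrt_pow2 (Rabs (Im z))) by apply Rabs_pos. apply sqrt_le_1_alt.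
  rewrite <- sq_abs. nra.
Qed.

Lemma ss_sum u : sq_summable u -> infinite_sum (fun k => Cmod (u k) ^ 2) (E u).
Proof. intros [l H]. unfold E. rewrite (sum_inf_eq _ _ H). exact H. Qed.

Lemma sq_nonneg z : 0 <= Cmod z ^ 2.
Proof. pose proof (Cmod_nonneg z). nra. Qed.

Lemma E_nonneg u : sq_summable u -> 0 <= E u.
Proof. intro H. apply sum_nonneg. intro; apply sq_nonneg. destruct H as [l H]; exists l; auto. Qed.

Lemma ball_E x : in_ball x -> sq_summable x /\ E x <= 1.
Proof.
  intros [Hs Hn]. split; auto. unfold norm in Hn. fold (E x) in Hn.
  pose proof (E_nonneg x Hs). apply sqrt_le_0; try lra. rewrite sqrt_1. auto.
Qed.

Lemma E_ball x : sq_summable x -> E x <= 1 -> in_ball x.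
Proof. intros Hs He. split; auto. unfold norm. fold (E x). rewrite <- sqrt_1. apply sqrt_le_1_alt. auto. Qed.

Lemma norm_lt x r : sq_summable x -> norm x < r -> E x < r ^ 2.
Proof.
  intros Hs Hn. unfold norm in Hn. fold (E x) in Hn. pose proof (E_nonneg x Hs).
  pose proof (sqrt_pos (E x)). rewrite <- (pow2_sqrt (E x)) by auto. nra.
Qed.

Lemma vsub_ss x y : sq_summable x -> sq_summable y ->
  sq_summable (vsub x y) /\ E (vsub x y) <= 2 * E x + 2 * E y.
Proof.
  intros Hx Hy. pose proof (is_plus _ _ _ _ (is_scal _ _ 2 (ss_sum x Hx)) (is_scal _ _ 2 (ss_sum y Hy))) as H.
  assert (Hb : forall k, 0 <= Cmod (vsub x y k) ^ 2 <= 2 * Cmod (x k) ^ 2 + 2 * Cmod (y k) ^ 2).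
  { intro k. split. apply sq_nonneg. unfold vsub, Csub. rewrite !Cmod_sq. simpl. pose proof (pow2_ge_0 (Re (x k) + Re (y k))). pose proof (pow2_ge_0 (Im (x k) + Im (y k))). nra. }
  destruct (comp_sum (fun k => Cmod (vsub x y k) ^ 2) _ _ Hb H) as [Hc Hl].
  - split. destruct Hc as [l Hl']. exists l. auto. exact Hl.
Qed.

Lemma amgm a b c d t : 0 < t -> 2 * Rabs (a * b + c * d) <= t * (a^2 + c^2) + (b^2 + d^2) / t.
Proof.
  intros Ht. set (s := / t). assert (Hts : t * s = 1) by (unfold s; field; lra).
  unfold Rdiv. fold s.
  assert (E1 : t*(a - s*b)^2 = t*a^2 - 2*(t*s)*a*b + (t*s)*s*b^2) by ring.
  assert (E2 : t*(a + s*b)^2 = t*a^2 + 2*(t*s)*a*b + (t*s)*s*b^2) by ring.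
  assert (E3 : t*(c - s*d)^2 = t*c^2 - 2*(t*s)*c*d + (t*s)*s*d^2) by ring.
  assert (E4 : t*(c + s*d)^2 = t*c^2 + 2*(t*s)*c*d + (t*s)*s*d^2) by ring.
  rewrite Hts in E1, E2, E3, E4.
  assert (0 <= t*(a - s*b)^2) by (apply Rmult_le_pos; [lra| apply pow2_ge_0]).
  assert (0 <= t*(a + s*b)^2) by (apply Rmult_le_pos; [lra| apply pow2_ge_0]).
  assert (0 <= t*(c - s*d)^2) by (apply Rmult_le_pos; [lra| apply pow2_ge_0]).
  assert (0 <= t*(c + s*d)^2) by (apply Rmult_le_pos; [lra| apply pow2_ge_0]).
  cut (Rabs (a * b + c * d) <= (t * (a^2 + c^2) + s * (b^2 + d^2)) / 2). lra.
  apply Rabs_le. split; lra.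
Qed.

Lemma reT_bound u w t k : 0 < t -> Rabs (reT u w k) <= (t * Cmod (u k) ^ 2 + Cmod (w k) ^ 2 / t) / 2.
Proof.
  intro Ht. rewrite !Cmod_sq. unfold reT. pose proof (amgm (Re (u k)) (Re (w k)) (Im (u k)) (Im (w k)) t Ht). lra.
Qed.

Lemma imT_bound u w t k : 0 < t -> Rabs (imT u w k) <= (t * Cmod (u k) ^ 2 + Cmod (w k) ^ 2 / t) / 2.
Proof.
  intro Ht. rewrite !Cmod_sq. unfold imT.
  pose proof (amgm (Im (u k)) (Re (w k)) (Re (u k)) (- Im (w k)) t Ht).
  replace (Im (u k) * Re (w k) + Re (u k) * - Im (w k)) with (Im (u k) * Re (w k) - Re (u k) * Im (w k)) in H by ring.
  replace ((Re (w k) ^ 2 + (- Im (w k)) ^ 2)) with (Re (w k) ^ 2 + Im (w k) ^ 2) in H by ring.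
  lra.
Qed.

Lemma inner_bound u w t : sq_summable u -> sq_summable w -> 0 < t ->
  conv (reT u w) /\ conv (imT u w) /\
  Rabs (Re (inner u w)) + Rabs (Im (inner u w)) <= t * E u + E w / t.
Proof.
  intros Hu Hw Ht.
  pose proof (is_scal _ _ (/2) (is_plus _ _ _ _ (is_scal _ _ t (ss_sum u Hu)) (is_scal _ _ (/t) (ss_sum w Hw)))) as H.
  assert (Hb1 : forall k, Rabs (reT u w k) <= /2 * (t * Cmod (u k) ^ 2 + /t * Cmod (w k) ^ 2)).
  { intro k. pose proof (reT_bound u w t k Ht). unfold Rdiv in H0. lra. }
  assert (Hb2 : forall k, Rabs (imT u w k) <= /2 * (t * Cmod (u k) ^ 2 + /t * Cmod (w k) ^ 2)).
  { intro k. pose proof (imT_bound u w t k Ht). unfold Rdiv in H0. lra. }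
  destruct (abs_sum _ _ _ Hb1 H) as [C1 B1].
  destruct (abs_sum _ _ _ Hb2 H) as [C2 B2].
  split; auto. split; auto. rewrite inner_eq. simpl. unfold Rdiv. lra.
Qed.

Lemma Cmod_inner_bound u w t : sq_summable u -> sq_summable w -> 0 < t ->
  Cmod (inner u w) <= t * E u + E w / t.
Proof.
  intros Hu Hw Ht. destruct (inner_bound u w t Hu Hw Ht) as [_ [_ H]].
  pose proof (Cmod_le_sum (inner u w)). lra.
Qed.

Lemma inner_approx u w v t : sq_summable u -> sq_summable w -> sq_summable v -> 0 < t ->
  Cmod (inner u w) <= 2 * Cmod (inner u v) + t * E u + E (vsub w v) / t.
Proof.
  intros Hu Hw Hv Ht.
  destruct (vsub_ss w v Hw Hv) as [Hd _].
  destruct (inner_bound u v t Hu Hv Ht) as [Cr1 [Ci1 _]].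
  destruct (inner_bound u (vsub w v) t Hu Hd Ht) as [Cr2 [Ci2 B2]].
  assert (Er : sum_inf (reT u w) = sum_inf (reT u v) + sum_inf (reT u (vsub w v))).
  { apply sum_inf_eq. apply (Un_cv_ext (fun n => sum_f_R0 (fun k => reT u v k + reT u (vsub w v) k) n)).
    intro n. apply sum_eq. intros. unfold reT, vsub, Csub. simpl. ring.
    apply is_plus; apply conv_sum; auto. }
  assert (Ei : sum_inf (imT u w) = sum_inf (imT u v) + sum_inf (imT u (vsub w v))).
  { apply sum_inf_eq. apply (Un_cv_ext (fun n => sum_f_R0 (fun k => imT u v k + imT u (vsub w v) k) n)).
    intro n. apply sum_eq. intros. unfold imT, vsub, Csub. simpl. ring.
    apply is_plus; apply conv_sum; auto. }
  pose proof (Cmod_le_sum (inner u w)). rewrite !inner_eq in *. simpl in *.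
  pose proof (Re_le_Cmod (inner u v)). pose proof (Im_le_Cmod (inner u v)). rewrite !inner_eq in *. simpl in *.
  rewrite Er, Ei in H |- *.
  pose proof (Rabs_triang (sum_inf (reT u v)) (sum_inf (reT u (vsub w v)))).
  pose proof (Rabs_triang (sum_inf (imT u v)) (sum_inf (imT u (vsub w v)))).
  lra.
Qed.

Lemma C_eq (a b : Defs.C) : Re a = Re b -> Im a = Im b -> a = b.
Proof. destruct a, b; simpl; intros; subst; auto. Qed.

Lemma shiftR_vsub x y : vsub (shiftR x) (shiftR y) = shiftR (vsub x y).
Proof.
  apply functional_extensionality. intros [|k]; unfold vsub, shiftR, Csub, C0; simpl; auto.
  apply C_eq; simpl; ring.
Qed.

Lemma iter_R_vsub n x y : vsub (Nat.iter n shiftR x) (Nat.iter n shiftR y) = Nat.iter n shiftR (vsub x y).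
Proof. induction n; simpl. reflexivity. rewrite shiftR_vsub, IHn. reflexivity. Qed.

Lemma partial_shift a b : a 0%nat = 0 -> (forall k, a (S k) = b k) ->
  forall n, sum_f_R0 a (S n) = sum_f_R0 b n.
Proof.
  intros H0 HS n. induction n. simpl. rewrite H0, HS. ring.
  change (sum_f_R0 a (S (S n))) with (sum_f_R0 a (S n) + a (S (S n))).
  rewrite IHn, HS. reflexivity.
Qed.

Lemma sum_shift a b : a 0%nat = 0 -> (forall k, a (S k) = b k) ->
  forall l, infinite_sum a l <-> infinite_sum b l.
Proof.
  intros H0 HS l. pose proof (partial_shift a b H0 HS) as P. split; intros H eps He.
  - destruct (H eps He) as [N HN]. exists N. intros n Hn. rewrite <- P. apply HN. lia.
  - destruct (H eps He) as [N HN]. exists (S N). intros n Hn. destruct n. lia.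
    rewrite P. apply HN. lia.
Qed.

Lemma inner_R u w : inner (shiftR u) w = inner u (shiftR_adj w).
Proof.
  rewrite !inner_eq. f_equal; apply sum_inf_iff; apply sum_shift; auto;
  unfold reT, imT, shiftR, C0; simpl; ring.
Qed.

Lemma inner_iter n u w : inner (Nat.iter n shiftR u) w = inner u (Nat.iter n shiftR_adj w).
Proof.
  revert w. induction n; intro w. reflexivity.
  change (Nat.iter (S n) shiftR u) with (shiftR (Nat.iter n shiftR u)).
  rewrite inner_R, IHn. rewrite <- Nat.iter_succ_r. reflexivity.
Qed.

Lemma iter_adj_apply n w k : Nat.iter n shiftR_adj w k = w (n + k)%nat.
Proof.
  revert k. induction n; intro k. reflexivity.
  change (Nat.iter (S n) shiftR_adj w k) with (Nat.iter n shiftR_adj w (S k)).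
  rewrite IHn. f_equal. lia.
Qed.

Lemma iter_R_apply n h k : Nat.iter n shiftR h (n + k)%nat = h k.
Proof.
  induction n. reflexivity.
  change (Nat.iter (S n) shiftR h (S n + k)%nat) with (Nat.iter n shiftR h (n + k)%nat). auto.
Qed.

Lemma iter_adj_R n x : Nat.iter n shiftR_adj (Nat.iter n shiftR x) = x.
Proof.
  induction n. reflexivity.
  rewrite Nat.iter_succ_r. change (Nat.iter (S n) shiftR x) with (shiftR (Nat.iter n shiftR x)).
  change (shiftR_adj (shiftR (Nat.iter n shiftR x))) with (fun k => Nat.iter n shiftR x k).
  exact IHn.
Qed.

Lemma R_ss u : sq_summable u -> sq_summable (shiftR u) /\ E (shiftR u) = E u.
Proof.
  intros Hu.
  assert (Hi : forall l, infinite_sum (fun k => Cmod (shiftR u k) ^ 2) l <-> infinite_sum (fun k => Cmod (u k) ^ 2) l).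
  { apply sum_shift; auto. simpl. unfold Cmod, C0. simpl. replace (0 * (0 * 1) + 0 * (0 * 1)) with 0 by ring. rewrite sqrt_0. ring. }
  split. destruct Hu as [l Hl]. exists l. apply Hi. auto.
  unfold E. apply sum_inf_iff. exact Hi.
Qed.

Lemma iter_R_ss n u : sq_summable u -> sq_summable (Nat.iter n shiftR u) /\ E (Nat.iter n shiftR u) = E u.
Proof.
  intro Hu. induction n. simpl. auto. destruct IHn as [H1 H2].
  simpl. destruct (R_ss _ H1). split; auto. congruence.
Qed.

Lemma partial_S b n : sum_f_R0 (fun k => b (S k)) n = sum_f_R0 b (S n) - b 0%nat.
Proof. induction n. simpl. ring. simpl in *. rewrite IHn. ring. Qed.

Lemma sum_tail1 b l : infinite_sum b l -> infinite_sum (fun k => b (S k)) (l - b 0%nat).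
Proof.
  intros H eps He. destruct (H eps He) as [N HN]. exists N. intros n Hn.
  rewrite partial_S. unfold Rdist. replace (sum_f_R0 b (S n) - b 0%nat - (l - b 0%nat)) with (sum_f_R0 b (S n) - l) by ring.
  apply HN. lia.
Qed.

Fixpoint psum (a : nat -> R) (n : nat) : R :=
  match n with O => 0 | S m => psum a m + a m end.

Lemma psum_sum a n : sum_f_R0 a n = psum a (S n).
Proof. induction n; simpl in *. ring. rewrite IHn. reflexivity. Qed.

Lemma sum_tail a L n : infinite_sum a L -> infinite_sum (fun k => a (n + k)%nat) (L - psum a n).
Proof.
  intro H. induction n. simpl. replace (L - 0) with L by ring. exact H.
  pose proof (sum_tail1 _ _ IHn). simpl in H0.
  change (psum a (S n)) with (psum a n + a n).
  replace (L - (psum a n + a n)) with (L - psum a n - a (n + 0)%nat) by (rewrite Nat.add_0_r; ring).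
  apply (Un_cv_ext (sum_f_R0 (fun k => a (n + S k)%nat))). intro m. apply sum_eq. intros. f_equal. lia.
  exact H0.
Qed.

Lemma adj_ss n w : sq_summable w ->
  sq_summable (Nat.iter n shiftR_adj w) /\ E (Nat.iter n shiftR_adj w) = E w - psum (fun k => Cmod (w k) ^ 2) n.
Proof.
  intro Hw. pose proof (sum_tail _ _ n (ss_sum w Hw)) as H.
  assert (Hi : infinite_sum (fun k => Cmod (Nat.iter n shiftR_adj w k) ^ 2) (E w - psum (fun k => Cmod (w k) ^ 2) n)).
  { apply (Un_cv_ext (sum_f_R0 (fun k => Cmod (w (n + k)%nat) ^ 2))). intro m. apply sum_eq. intros. rewrite iter_adj_apply. auto. exact H. }
  split. eexists; eauto. unfold E at 1. apply sum_inf_eq. exact Hi.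
Qed.

Lemma adj_E_le n w : sq_summable w -> E (Nat.iter n shiftR_adj w) <= E w.
Proof.
  intro Hw. destruct (adj_ss n w Hw) as [_ H]. rewrite H.
  assert (0 <= psum (fun k => Cmod (w k) ^ 2) n). { clear H. induction n; cbn [psum]. lra. pose proof (sq_nonneg (w n)). lra. }
  lra.
Qed.

Lemma coord_le n w : sq_summable w -> Cmod (w n) ^ 2 <= E (Nat.iter n shiftR_adj w).
Proof.
  intro Hw. destruct (adj_ss n w Hw) as [Hs _].
  pose proof (term_le_sum (fun k => Cmod (Nat.iter n shiftR_adj w k) ^ 2) 0 (fun k => sq_nonneg _) Hs).
  simpl in H. rewrite iter_adj_apply, Nat.add_0_r in H. exact H.
Qed.

Lemma tail_small w th : sq_summable w -> 0 < th ->
  exists M, forall n, (n >= M)%nat -> E (Nat.iter n shiftR_adj w) < th.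
Proof.
  intros Hw Ht. pose proof (ss_sum w Hw) as H. destruct (H th Ht) as [N HN].
  exists (S N). intros n Hn. destruct (adj_ss n w Hw) as [_ ->].
  destruct n. lia. specialize (HN n ltac:(lia)). rewrite psum_sum in HN.
  unfold Rdist in HN. apply Rabs_def2 in HN. lra.
Qed.

Lemma small_pow y : 0 < y -> exists N, (/2)^(S N) < y.
Proof.
  intro Hy. destruct (pow_lt_1_zero (/2) ltac:(rewrite Rabs_pos_eq; lra) y Hy) as [N HN].
  exists N. specialize (HN (S N) ltac:(lia)). rewrite Rabs_pos_eq in HN; auto. apply pow_le. lra.
Qed.

Lemma INR_S_pos N : 0 < INR (S N).
Proof. apply lt_0_INR. lia. Qed.

Lemma L_dom0 (f : nat -> nat -> R) K : (forall m i, 0 <= f m i <= K) ->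
  (forall i eps, 0 < eps -> exists M, forall m, (m >= M)%nat -> f m i < eps) ->
  forall d, 0 < d -> exists m, sum_inf (fun i => (/2)^(S i) * f m i) < d.
Proof.
  intros Hb Hc d Hd.
  assert (HK : 0 <= K) by (specialize (Hb 0%nat 0%nat); lra).
  destruct (small_pow (d / (2 * (K + 1)))) as [N HN]. apply Rdiv_lt_0_compat; lra.
  assert (HKN : K * (/2)^(S N) < d / 2).
  { assert (K * (/2)^(S N) <= K * (d / (2 * (K + 1)))) by (apply Rmult_le_compat_l; lra).
    assert (K * (d / (2 * (K + 1))) < d / 2).
    { unfold Rdiv. rewrite Rinv_mult. apply Rmult_lt_reg_r with (K + 1). lra.
      replace (K * (d * (/ 2 * / (K + 1))) * (K + 1)) with (K * d * / 2) by (field; lra). nra. }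
    lra. }
  set (e := d / (4 * INR (S N))). pose proof (INR_S_pos N).
  assert (He : 0 < e) by (unfold e; apply Rdiv_lt_0_compat; lra).
  destruct (fin_bound (fun i M => forall m, (m >= M)%nat -> f m i < e) (fun i => Hc i e He) N) as [J HJ].
  exists J.
  assert (Ha : forall i, 0 <= (/2)^(S i) * f J i <= K * (/2)^(S i)).
  { intro i. specialize (Hb J i). pose proof (half_pow_pos (S i)). split; nra. }
  pose proof (L_trunc _ K N Ha).
  assert (sum_f_R0 (fun i => (/2)^(S i) * f J i) N <= INR (S N) * e).
  { apply partial_bound. intros i Hi. destruct (HJ i Hi) as [j [Hj Pj]].
    specialize (Pj J Hj). specialize (Hb J i). pose proof (half_pow_pos (S i)). pose proof (half_pow_le1 (S i)). nra. }
  assert (INR (S N) * e = d / 4) by (unfold e; field; lra).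
  lra.
Qed.

Lemma h_ss h (Hh : dense_seq h) i : sq_summable (h i) /\ E (h i) <= 1.
Proof. apply ball_E. apply Hh. Qed.

Lemma rho_conv h (Hh : dense_seq h) z : sq_summable z -> E z <= 4 ->
  conv (fun i => (/2)^(S i) * Cmod (inner z (h i))) /\
  forall i, 0 <= (/2)^(S i) * Cmod (inner z (h i)) <= 5 * (/2)^(S i).
Proof.
  intros Hz HE.
  assert (Hb : forall i, 0 <= (/2)^(S i) * Cmod (inner z (h i)) <= 5 * (/2)^(S i)).
  { intro i. destruct (h_ss h Hh i) as [Hs Hi]. pose proof (Cmod_inner_bound z (h i) 1 Hz Hs ltac:(lra)).
    pose proof (Cmod_nonneg (inner z (h i))). pose proof (half_pow_pos (S i)).
    unfold Rdiv in H. rewrite Rinv_1 in H. split; nra. }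
  split; auto. apply (L_geo _ 5 Hb).
Qed.

Lemma part1 h (Hh : dense_seq h) : UEC in_ball (rho h) (fun n x => Nat.iter n shiftR x).
Proof.
  intros eps Heps.
  destruct (small_pow (eps / 10)) as [N HN]. lra.
  pose proof (INR_S_pos N).
  set (eta := eps / (4 * INR (S N))).
  assert (Heta : 0 < eta) by (unfold eta; apply Rdiv_lt_0_compat; lra).
  set (t := eta / 16). set (th := eta * eta / 64).
  assert (Ht : 0 < t) by (unfold t; lra).
  assert (Hth : 0 < th) by (unfold th; nra).
  assert (Htt : 4 * t + th / t = eta / 2) by (unfold t, th; field; lra).
  destruct (fin_bound (fun i M => forall n, (n >= M)%nat -> E (Nat.iter n shiftR_adj (h i)) < th)
     (fun i => tail_small (h i) th (proj1 (h_ss h Hh i)) Hth) N) as [M0 HM0].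
  assert (Hden : forall i n, exists j, E (vsub (Nat.iter n shiftR_adj (h i)) (h j)) < th).
  { intros i n. destruct (h_ss h Hh i) as [Hs _]. destruct (adj_ss n (h i) Hs) as [Hs' _].
    assert (in_ball (Nat.iter n shiftR_adj (h i))).
    { apply E_ball; auto. pose proof (adj_E_le n (h i) Hs). pose proof (h_ss h Hh i). lra. }
    destruct (proj2 Hh _ H0 (sqrt th) (sqrt_lt_R0 _ Hth)) as [j Hj]. exists j.
    destruct (vsub_ss _ (h j) Hs' (proj1 (h_ss h Hh j))) as [Hd _].
    pose proof (norm_lt _ _ Hd Hj). rewrite pow2_sqrt in H1 by lra. exact H1. }
  assert (HJi : forall i, exists Ji, forall n, (n <= M0)%nat -> exists j, (j <= Ji)%nat /\
            E (vsub (Nat.iter n shiftR_adj (h i)) (h j)) < th).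
  { intro i. apply (fin_bound (fun n j => E (vsub (Nat.iter n shiftR_adj (h i)) (h j)) < th)).
    intro n. apply Hden. }
  destruct (fin_bound _ HJi N) as [J HJ].
  exists (eta / 4 * (/2)^(S J)). split.
  { pose proof (half_pow_pos (S J)). apply Rlt_gt. apply Rmult_lt_0_compat; lra. }
  intros n x y Hx Hy Hr.
  destruct (ball_E x Hx) as [Hxs Hxe]. destruct (ball_E y Hy) as [Hys Hye].
  destruct (vsub_ss x y Hxs Hys) as [Hzs Hze].
  set (z := vsub x y) in *.
  assert (HzE : E z <= 4) by lra.
  destruct (rho_conv h Hh z Hzs HzE) as [Cz Bz].
  assert (Hrho : rho h x y = sum_inf (fun i => (/2)^(S i) * Cmod (inner z (h i)))) by reflexivity.
  assert (Hterm : forall j, (j <= J)%nat -> Cmod (inner z (h j)) < eta / 4).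
  { intros j Hj. pose proof (term_le_sum _ j (fun i => proj1 (Bz i)) Cz). cbv beta in H0.
    rewrite <- Hrho in H0. pose proof (half_pow_le (S j) (S J) ltac:(lia)).
    pose proof (half_pow_pos (S j)). pose proof (half_pow_pos (S J)).
    assert ((/2)^(S j) * Cmod (inner z (h j)) < (/2)^(S j) * (eta / 4)) by nra.
    apply Rmult_lt_reg_l in H4; auto. }
  assert (Hclaim : forall i, (i <= N)%nat -> Cmod (inner z (Nat.iter n shiftR_adj (h i))) <= eta).
  { intros i Hi. destruct (h_ss h Hh i) as [Hs _]. destruct (adj_ss n (h i) Hs) as [Hws _].
    pose proof (E_nonneg z Hzs).
    destruct (HM0 i Hi) as [j0 [Hj0 P0]].
    destruct (Nat.le_gt_cases M0 n) as [Hn | Hn].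
    - specialize (P0 n ltac:(lia)).
      pose proof (Cmod_inner_bound z _ t Hzs Hws Ht).
      assert (t * E z <= t * 4) by (apply Rmult_le_compat_l; lra).
      assert (E (Nat.iter n shiftR_adj (h i)) / t <= th / t) by (unfold Rdiv; apply Rmult_le_compat_r; [apply Rlt_le, Rinv_0_lt_compat; auto | lra]).
      lra.
    - destruct (HJ i Hi) as [Ji [HJi' PJ]]. destruct (PJ n ltac:(lia)) as [j [Hj Pj]].
      pose proof (inner_approx z _ (h j) t Hzs Hws (proj1 (h_ss h Hh j)) Ht).
      specialize (Hterm j ltac:(lia)).
      assert (t * E z <= t * 4) by (apply Rmult_le_compat_l; lra).
      assert (E (vsub (Nat.iter n shiftR_adj (h i)) (h j)) / t <= th / t) by (unfold Rdiv; apply Rmult_le_compat_r; [apply Rlt_le, Rinv_0_lt_compat; auto | lra]).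
      lra. }
  unfold rho. rewrite iter_R_vsub. fold z.
  rewrite (sum_inf_ext _ (fun i => (/2)^(S i) * Cmod (inner z (Nat.iter n shiftR_adj (h i)))))
    by (intro i; rewrite inner_iter; reflexivity).
  assert (Ha : forall i, 0 <= (/2)^(S i) * Cmod (inner z (Nat.iter n shiftR_adj (h i))) <= 5 * (/2)^(S i)).
  { intro i. destruct (h_ss h Hh i) as [Hs Hi1]. destruct (adj_ss n (h i) Hs) as [Hws _].
    pose proof (adj_E_le n (h i) Hs).
    pose proof (Cmod_inner_bound z _ 1 Hzs Hws ltac:(lra)) as Hb1.
    pose proof (Cmod_nonneg (inner z (Nat.iter n shiftR_adj (h i)))). pose proof (half_pow_pos (S i)).
    unfold Rdiv in Hb1. rewrite Rinv_1 in Hb1. split; nra. }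
  pose proof (L_trunc _ 5 N Ha).
  assert (sum_f_R0 (fun i => (/2)^(S i) * Cmod (inner z (Nat.iter n shiftR_adj (h i)))) N <= INR (S N) * eta).
  { apply partial_bound. intros i Hi. specialize (Hclaim i Hi).
    pose proof (Cmod_nonneg (inner z (Nat.iter n shiftR_adj (h i)))).
    pose proof (half_pow_pos (S i)). pose proof (half_pow_le1 (S i)). nra. }
  assert (INR (S N) * eta = eps / 4) by (unfold eta; field; lra).
  lra.
Qed.

Definition single (a : Defs.C) : vec := fun k => match k with O => a | S _ => C0 end.

Lemma sum_single a : (forall k, a (S k) = 0) -> infinite_sum a (a 0%nat).
Proof.
  intros H eps He. exists 0%nat. intros n _. unfold Rdist.
  assert (sum_f_R0 a n = a 0%nat). { induction n. reflexivity. simpl. rewrite IHn, H. ring. }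
  rewrite H0. rewrite Rminus_diag, Rabs_R0. lra.
Qed.

Lemma Cmod_C0 : Cmod C0 = 0.
Proof. unfold Cmod, C0. simpl. replace (0 * (0 * 1) + 0 * (0 * 1)) with 0 by ring. apply sqrt_0. Qed.

Lemma single_ss a : sq_summable (single a) /\ E (single a) = Cmod a ^ 2.
Proof.
  assert (H : infinite_sum (fun k => Cmod (single a k) ^ 2) (Cmod a ^ 2)).
  { apply (sum_single (fun k => Cmod (single a k) ^ 2)). intro k. simpl. rewrite Cmod_C0. ring. }
  split. eexists; eauto. apply sum_inf_eq. exact H.
Qed.

Lemma Re_inner_single a w : Re (inner (single a) w) = Re a * Re (w 0%nat) + Im a * Im (w 0%nat).
Proof.
  rewrite inner_eq. simpl. apply sum_inf_eq.
  apply (sum_single (reT (single a) w)). intro k. unfold reT, single, C0. simpl. ring.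
Qed.

Lemma vsub_zero x : vsub x zerov = x.
Proof. apply functional_extensionality. intro k. apply C_eq; unfold vsub, Csub, zerov, C0; simpl; ring. Qed.

Lemma zero_single : zerov = single C0.
Proof. apply functional_extensionality. intros [|k]; reflexivity. Qed.

Lemma zero_ss : sq_summable zerov /\ E zerov = 0.
Proof. rewrite zero_single. destruct (single_ss C0). rewrite Cmod_C0 in H0. split; auto. rewrite H0. ring. Qed.

Lemma iter_adj_zero n : Nat.iter n shiftR_adj zerov = zerov.
Proof. apply functional_extensionality. intro k. rewrite iter_adj_apply. reflexivity. Qed.

Definition e0 : vec := single (mkC 1 0).

Lemma Cmod_1 : Cmod (mkC 1 0) = 1.
Proof. unfold Cmod. simpl. replace (1 * (1 * 1) + 0 * (0 * 1)) with 1 by ring. apply sqrt_1. Qed.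

Lemma e0_ss : sq_summable e0 /\ E e0 = 1.
Proof. unfold e0. destruct (single_ss (mkC 1 0)). rewrite Cmod_1 in H0. split; auto. rewrite H0. ring. Qed.

Lemma good_index h (Hh : dense_seq h) : exists i0, Re (h i0 0%nat) > 1/2.
Proof.
  destruct e0_ss as [Hs He].
  destruct (proj2 Hh e0 (E_ball e0 Hs ltac:(lra)) (1/2) ltac:(lra)) as [i Hi].
  exists i. destruct (h_ss h Hh i) as [Hhs _].
  destruct (vsub_ss e0 (h i) Hs Hhs) as [Hd _].
  pose proof (norm_lt _ _ Hd Hi). pose proof (coord_le 0 _ Hd).
  replace (Nat.iter 0 shiftR_adj (vsub e0 (h i))) with (vsub e0 (h i)) in H0 by reflexivity.
  replace (vsub e0 (h i) 0%nat) with (mkC (1 - Re (h i 0%nat)) (0 - Im (h i 0%nat))) in H0 by reflexivity.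
  rewrite Cmod_sq in H0. cbn [Re Im] in H0.
  pose proof (pow2_ge_0 (0 - Im (h i 0%nat))).
  assert ((1/2)^2 = 1/4) by field.
  assert (Hq : (1 - Re (h i 0%nat)) ^ 2 < 1/4) by lra.
  destruct (Rle_dec (Re (h i 0%nat)) (1/2)); [|lra].
  assert ((1/2) * (1/2) <= (1 - Re (h i 0%nat)) * (1 - Re (h i 0%nat))) by (apply Rmult_le_compat; lra).
  simpl in Hq. lra.
Qed.

Lemma part2 h (Hh : dense_seq h) : ~ UEC in_ball (rho h) (fun n x => Nat.iter n shiftR_adj x).
Proof.
  intro U. destruct (good_index h Hh) as [i0 Hi0].
  destruct e0_ss as [Hes HeE].
  set (c := (/2)^(S i0) * (1/2)).
  assert (Hc : c > 0) by (unfold c; pose proof (half_pow_pos (S i0)); nra).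
  assert (Hlow : c <= rho h e0 zerov).
  { unfold rho. rewrite vsub_zero.
    destruct (rho_conv h Hh e0 Hes ltac:(lra)) as [Cv Bv].
    pose proof (term_le_sum _ i0 (fun i => proj1 (Bv i)) Cv). cbv beta in H.
    assert (Cmod (inner e0 (h i0)) >= 1/2).
    { pose proof (Re_le_Cmod (inner e0 (h i0))). unfold e0 in *. rewrite Re_inner_single in H0.
      simpl in H0. pose proof (Rle_abs (1 * Re (h i0 0%nat) + 0 * Im (h i0 0%nat))). lra. }
    unfold c. pose proof (half_pow_pos (S i0)). nra. }
  destruct (U c Hc) as [d [Hd Hu]].
  set (f := fun m i => Cmod (inner (Nat.iter m shiftR e0) (h i))).
  assert (Hfb : forall m i, 0 <= f m i <= 2).
  { intros m i. unfold f. split. apply Cmod_nonneg.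
    destruct (iter_R_ss m e0 Hes) as [Hs2 HE2]. destruct (h_ss h Hh i) as [Hs3 HE3].
    pose proof (Cmod_inner_bound _ _ 1 Hs2 Hs3 ltac:(lra)). unfold Rdiv in H. rewrite Rinv_1 in H. lra. }
  assert (Hfc : forall i eps, 0 < eps -> exists M, forall m, (m >= M)%nat -> f m i < eps).
  { intros i eps He. destruct (h_ss h Hh i) as [Hs3 HE3].
    destruct (tail_small (h i) (eps / 4 * (eps / 4)) Hs3 ltac:(nra)) as [M HM]. exists M.
    intros m Hm. unfold f. rewrite inner_iter.
    destruct (adj_ss m (h i) Hs3) as [Hs4 _].
    pose proof (Cmod_inner_bound _ _ (eps / 4) Hes Hs4 ltac:(lra)).
    specialize (HM m Hm). rewrite HeE in H.
    assert (E (Nat.iter m shiftR_adj (h i)) / (eps / 4) < eps / 4).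
    { apply Rmult_lt_reg_r with (eps / 4). lra. unfold Rdiv at 1. rewrite Rmult_assoc, Rinv_l by lra. lra. }
    lra. }
  destruct (L_dom0 f 2 Hfb Hfc d Hd) as [m Hm].
  destruct (iter_R_ss m e0 Hes) as [Hs2 HE2].
  destruct zero_ss as [Hzs HzE].
  specialize (Hu m (Nat.iter m shiftR e0) zerov (E_ball _ Hs2 ltac:(lra)) (E_ball _ Hzs ltac:(lra))).
  assert (rho h (Nat.iter m shiftR e0) zerov < d) by (unfold rho; rewrite vsub_zero; exact Hm).
  specialize (Hu H). cbv beta in Hu. rewrite iter_adj_R, iter_adj_zero in Hu. lra.
Qed.

Definition G (h : nat -> vec) (a : Defs.C) := sum_inf (fun j => (/2)^(S j) * Cmod (inner (single a) (h j))).

Lemma G_prop h (Hh : dense_seq h) a c : Cmod a ^ 2 <= 1 -> 0 < c ->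
  (forall j, Cmod (inner (single a) (h j)) <= c) ->
  conv (fun j => (/2)^(S j) * Cmod (inner (single a) (h j))) /\ 0 <= G h a <= c.
Proof.
  intros Ha Hc Hb.
  assert (Hb' : forall j, 0 <= (/2)^(S j) * Cmod (inner (single a) (h j)) <= c * (/2)^(S j)).
  { intro j. pose proof (half_pow_pos (S j)). pose proof (Cmod_nonneg (inner (single a) (h j))).
    specialize (Hb j). split; nra. }
  destruct (L_geo _ c Hb') as [Cv Le]. split; auto. split; auto.
  apply sum_nonneg; auto. intro j; apply Hb'.
Qed.

Lemma G_bound2 h (Hh : dense_seq h) a j : Cmod a ^ 2 <= 1 -> Cmod (inner (single a) (h j)) <= 2.
Proof.
  intro Ha. destruct (single_ss a) as [Hs HE]. destruct (h_ss h Hh j) as [Hs2 HE2].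
  pose proof (Cmod_inner_bound _ _ 1 Hs Hs2 ltac:(lra)). unfold Rdiv in H. rewrite Rinv_1 in H. lra.
Qed.

Lemma dWO_single h (Hh : dense_seq h) (a : nat -> Defs.C) (A B : op) :
  (forall i, vsub (A (h i)) (B (h i)) = single (a i)) -> (forall i, Cmod (a i) ^ 2 <= 1) ->
  dWO h A B = sum_inf (fun i => (/2)^(S i) * G h (a i)).
Proof.
  intros Hv Ha. unfold dWO. apply sum_inf_ext. intro i.
  destruct (G_prop h Hh (a i) 2 (Ha i) ltac:(lra) (fun j => G_bound2 h Hh (a i) j (Ha i))) as [Cv _].
  apply sum_inf_eq. unfold G.
  apply (Un_cv_ext (sum_f_R0 (fun j => (/2)^(S i) * ((/2)^(S j) * Cmod (inner (single (a i)) (h j)))))).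
  intro n. apply sum_eq. intros. rewrite Hv. ring.
  apply is_scal. apply conv_sum. exact Cv.
Qed.

Lemma outer_prop h (Hh : dense_seq h) (a : nat -> Defs.C) : (forall i, Cmod (a i) ^ 2 <= 1) ->
  forall i0, (/2)^(S i0) * G h (a i0) <= sum_inf (fun i => (/2)^(S i) * G h (a i)).
Proof.
  intros Ha i0.
  assert (Hb : forall i, 0 <= (/2)^(S i) * G h (a i) <= 2 * (/2)^(S i)).
  { intro i. destruct (G_prop h Hh (a i) 2 (Ha i) ltac:(lra) (fun j => G_bound2 h Hh (a i) j (Ha i))) as [_ B].
    pose proof (half_pow_pos (S i)). split; nra. }
  destruct (L_geo _ 2 Hb) as [Cv _].
  apply (term_le_sum _ i0 (fun i => proj1 (Hb i)) Cv).
Qed.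

Definition A0 : op := fun _ => zerov.
Definition Bm (m : nat) : op := fun x => single (x m).

Lemma Cmod_Csub0 a : Cmod (Csub C0 a) ^ 2 = Cmod a ^ 2.
Proof. rewrite !Cmod_sq. unfold Csub, C0. cbn [Re Im]. ring. Qed.

Lemma vsub_zero_single a : vsub zerov (single a) = single (Csub C0 a).
Proof. apply functional_extensionality. intros [|k]. reflexivity. apply C_eq; unfold vsub, Csub, zerov, single, C0; simpl; ring. Qed.

Lemma norm_E x : norm x = sqrt (E x).
Proof. reflexivity. Qed.

Lemma A0_op : in_opball A0.
Proof.
  destruct zero_ss as [Hs HE]. split; [|split].
  - intros x Hx. split; auto. unfold A0. rewrite !norm_E, HE, sqrt_0. apply sqrt_pos.
  - intros. unfold A0. apply functional_extensionality. intro k. apply C_eq; unfold vadd, Cadd, zerov, C0; simpl; ring.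
  - intros. unfold A0. apply functional_extensionality. intro k. apply C_eq; unfold vscale, Cmul, zerov, C0; simpl; ring.
Qed.

Lemma Bm_op m : in_opball (Bm m).
Proof.
  split; [|split].
  - intros x Hx. destruct (single_ss (x m)) as [Hs HE]. split; auto. unfold Bm. rewrite !norm_E, HE.
    apply sqrt_le_1_alt. pose proof (coord_le m x Hx). pose proof (adj_E_le m x Hx). lra.
  - intros. unfold Bm. apply functional_extensionality. intros [|k]. reflexivity.
    apply C_eq; unfold vadd, Cadd, single, C0; simpl; ring.
  - intros. unfold Bm. apply functional_extensionality. intros [|k]. reflexivity.
    apply C_eq; unfold vscale, Cmul, single, C0; simpl; ring.
Qed.

Lemma iter_R_at n x : Nat.iter n shiftR x n = x 0%nat.
Proof. pose proof (iter_R_apply n x 0). rewrite Nat.add_0_r in H. exact H. Qed.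

Lemma part3 h (Hh : dense_seq h) :
  ~ UEC in_opball (dWO h) (fun n (A : op) => fun x => A (Nat.iter n shiftR x)).
Proof.
  intro U. destruct (good_index h Hh) as [i0 Hi0].
  set (c := (/2)^(S i0) * ((/2)^(S i0) * (1/4))).
  assert (Hc : c > 0) by (unfold c; pose proof (half_pow_pos (S i0)); nra).
  destruct (U c Hc) as [d [Hd Hu]].
  assert (Hcoord : forall i m, Cmod (h i m) ^ 2 <= E (Nat.iter m shiftR_adj (h i)) /\ E (Nat.iter m shiftR_adj (h i)) <= 1).
  { intros i m. destruct (h_ss h Hh i) as [Hs HE]. pose proof (coord_le m _ Hs). pose proof (adj_E_le m _ Hs). split; lra. }
  set (F := fun m i => G h (Csub C0 (h i m))).
  assert (Ha1 : forall m i, Cmod (Csub C0 (h i m)) ^ 2 <= 1).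
  { intros m i. rewrite Cmod_Csub0. destruct (Hcoord i m). lra. }
  assert (Hfb : forall m i, 0 <= F m i <= 2).
  { intros m i. unfold F. apply (G_prop h Hh _ 2 (Ha1 m i) ltac:(lra) (fun j => G_bound2 h Hh _ j (Ha1 m i))). }
  assert (Hfc : forall i eps, 0 < eps -> exists M, forall m, (m >= M)%nat -> F m i < eps).
  { intros i eps He. destruct (h_ss h Hh i) as [Hs3 HE3].
    destruct (tail_small (h i) (eps / 4 * (eps / 4)) Hs3 ltac:(nra)) as [M HM]. exists M.
    intros m Hm. specialize (HM m Hm). destruct (Hcoord i m) as [Hc1 _].
    assert (Hb : forall j, Cmod (inner (single (Csub C0 (h i m))) (h j)) <= eps / 2).
    { intro j. destruct (single_ss (Csub C0 (h i m))) as [Hs HE]. destruct (h_ss h Hh j) as [Hs2 HE2].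
      pose proof (Cmod_inner_bound _ _ (4 / eps) Hs Hs2 ltac:(apply Rdiv_lt_0_compat; lra)).
      rewrite HE, Cmod_Csub0 in H.
      assert (4 / eps * Cmod (h i m) ^ 2 <= eps / 4).
      { apply Rmult_le_reg_r with eps. lra. unfold Rdiv.
        replace (4 * / eps * Cmod (h i m) ^ 2 * eps) with (4 * Cmod (h i m) ^ 2) by (field; lra).
        nra. }
      assert (E (h j) / (4 / eps) <= eps / 4).
      { unfold Rdiv. rewrite Rinv_mult, Rinv_inv. nra. }
      lra. }
    destruct (G_prop h Hh _ (eps / 2) (Ha1 m i) ltac:(lra) Hb) as [_ B]. unfold F. lra. }
  destruct (L_dom0 F 2 Hfb Hfc d Hd) as [m Hm].
  specialize (Hu m A0 (Bm m) A0_op (Bm_op m)).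
  assert (dWO h A0 (Bm m) < d).
  { rewrite (dWO_single h Hh (fun i => Csub C0 (h i m))); auto.
    intro i. unfold A0, Bm. apply vsub_zero_single. }
  specialize (Hu H).
  assert (Ha2 : forall i, Cmod (Csub C0 (h i 0%nat)) ^ 2 <= 1) by (intro i; apply (Ha1 0%nat)).
  rewrite (dWO_single h Hh (fun i => Csub C0 (h i 0%nat))) in Hu; auto.
  2:{ intro i. cbv beta. unfold A0, Bm. rewrite iter_R_at. apply vsub_zero_single. }
  pose proof (outer_prop h Hh _ Ha2 i0). cbv beta in H0.
  destruct (G_prop h Hh _ 2 (Ha2 i0) ltac:(lra) (fun j => G_bound2 h Hh _ j (Ha2 i0))) as [Cv _].
  pose proof (term_le_sum _ i0 (fun j => Rmult_le_pos _ _ (Rlt_le _ _ (half_pow_pos (S j))) (Cmod_nonneg _)) Cv).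
  cbv beta in H1. fold (G h (Csub C0 (h i0 0%nat))) in H1.
  assert (Cmod (inner (single (Csub C0 (h i0 0%nat))) (h i0)) >= 1/4).
  { pose proof (Re_le_Cmod (inner (single (Csub C0 (h i0 0%nat))) (h i0))) as Hr.
    assert (Hre : Re (inner (single (Csub C0 (h i0 0%nat))) (h i0)) =
       - (Re (h i0 0%nat) * Re (h i0 0%nat) + Im (h i0 0%nat) * Im (h i0 0%nat))).
    { rewrite Re_inner_single. unfold Csub, C0. cbn [Re Im]. ring. }
    rewrite Hre, Rabs_Ropp in Hr.
    pose proof (Rle_abs (Re (h i0 0%nat) * Re (h i0 0%nat) + Im (h i0 0%nat) * Im (h i0 0%nat))).
    assert (0 <= Im (h i0 0%nat) * Im (h i0 0%nat)) by nra.
    assert (1/2 * (1/2) <= Re (h i0 0%nat) * Re (h i0 0%nat)) by (apply Rmult_le_compat; lra).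
    lra. }
  pose proof (half_pow_pos (S i0)).
  assert (c <= (/2)^(S i0) * G h (Csub C0 (h i0 0%nat))).
  { unfold c. apply Rmult_le_compat_l. lra. nra. }
  lra.
Qed.

Theorem mainTheorem9 (h : nat -> vec) (Hh : dense_seq h) :
  UEC in_ball (rho h) (fun n x => Nat.iter n shiftR x) /\
  ~ UEC in_ball (rho h) (fun n x => Nat.iter n shiftR_adj x) /\
  ~ UEC in_opball (dWO h) (fun n (A : op) => fun x => A (Nat.iter n shiftR x)).
Proof.
  split; [apply part1; exact Hh|split; [apply part2; exact Hh|apply part3; exact Hh]].
Qed.
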